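(* Let $\pi$ be a polygon without self-intersections with edges $\pi_1,\dots,\pi_R$, and let $\lambda_r=\lambda(v_r)$ where $v_r$ is a direction vector of $\pi_r$. For $k\in\mathbb N$ let $B_k\pi=\{kx:x\in\pi\}$ and let $L_k\pi$ be the lattice approximation of $B_k\pi$. Then $$\lim_{k\to\infty}\frac{|L_k\pi|}{\operatorname{length}B_k\pi}=\sum_{r=1}^R\frac{1}{\sqrt{1+\lambda_r^2}}\,\frac{\operatorname{length}\pi_r}{\operatorname{length}\pi}.$$
   Context: $\lambda(v)=\min(|v_2/v_1|,|v_1/v_2|)\in[0,1]$ for $v=(v_1,v_2)\ne0$. Lattice approximation of a nondegenerate segment $s$ with direction $v$: if $|v_2|\le|v_1|$ write $s=\{(x,\lambda x+b):x\in I\}$, $\lambda=v_2/v_1$, $L(s)=\{(z,\lfloor\lambda z+b\rfloor):z\in I\cap\mathbb Z\}$; otherwise write $s=\{(\mu y+b,y):y\in J\}$, $\mu=v_1/v_2$, $L(s)=\{(\lfloor\mu z+b\rfloor,z):z\in J\cap\mathbb Z\}$. The lattice approximation of a polygon is the union of the lattice approximations of its edges. Lengths are Euclidean. *)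

(* Defs.v *)
From Stdlib Require Import Reals ZArith List.
Open Scope R_scope.

Definition pt := (R * R)%type.

Definition edist (a b : pt) : R :=
  sqrt ((fst b - fst a) ^ 2 + (snd b - snd a) ^ 2).

Definition on_seg (a b x : pt) : Prop :=
  exists t, 0 <= t <= 1 /\
    fst x = fst a + t * (fst b - fst a) /\
    snd x = snd a + t * (snd b - snd a).

(* lambda(v) = min(|v2/v1|, |v1/v2|) for v <> 0, written by cases
   (the smaller of the two ratios is the one with the larger denominator). *)
Definition lam (v : pt) : R :=
  if Rle_dec (Rabs (snd v)) (Rabs (fst v))
  then Rabs (snd v / fst v) else Rabs (fst v / snd v).

(* floor : R -> Z  (Int_part r = up r - 1 is the floor of r). *)
Definition Zfloor (x : R) : Z := Int_part x.

Definition lattice_seg (a b : pt) (z : Z * Z) : Prop :=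
  let v1 := fst b - fst a in
  let v2 := snd b - snd a in
  if Rle_dec (Rabs v2) (Rabs v1) then
    (* s = {(x, l x + c) : x in I} *)
    let l := v2 / v1 in
    let c := snd a - l * fst a in
    Rmin (fst a) (fst b) <= IZR (fst z) <= Rmax (fst a) (fst b) /\
    snd z = Zfloor (l * IZR (fst z) + c)
  else
    (* s = {(m y + c, y) : y in J} *)
    let m := v1 / v2 in
    let c := fst a - m * snd a in
    Rmin (snd a) (snd b) <= IZR (snd z) <= Rmax (snd a) (snd b) /\
    fst z = Zfloor (m * IZR (snd z) + c).

(* A polygon with n vertices p 0, ..., p (n-1); edge r is [p r, p ((r+1) mod n)]. *)
Definition nxt (n i : nat) : nat := Nat.modulo (S i) n.

Definition simple_polygon (n : nat) (p : nat -> pt) : Prop :=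
  (3 <= n)%nat /\
  (forall i, (i < n)%nat -> p i <> p (nxt n i)) /\
  (forall i j x, (i < n)%nat -> (j < n)%nat -> i <> j ->
     on_seg (p i) (p (nxt n i)) x -> on_seg (p j) (p (nxt n j)) x ->
     (j = nxt n i /\ x = p j) \/ (i = nxt n j /\ x = p i)).

Definition edge_dir (n : nat) (p : nat -> pt) (r : nat) : pt :=
  (fst (p (nxt n r)) - fst (p r), snd (p (nxt n r)) - snd (p r)).

Fixpoint rsum (f : nat -> R) (n : nat) : R :=
  match n with O => 0 | S m => rsum f m + f m end.

Definition perimeter (n : nat) (p : nat -> pt) : R :=
  rsum (fun r => edist (p r) (p (nxt n r))) n.

Definition scale (k : nat) (p : nat -> pt) : nat -> pt :=
  fun i => (INR k * fst (p i), INR k * snd (p i)).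

Definition lattice_poly (n : nat) (p : nat -> pt) (z : Z * Z) : Prop :=
  exists r, (r < n)%nat /\ lattice_seg (p r) (p (nxt n r)) z.

Definition is_card (P : Z * Z -> Prop) (N : nat) : Prop :=
  exists l : list (Z * Z), NoDup l /\ (forall z, In z l <-> P z) /\ length l = N.

(* Main.v *)
Require Import Defs.
From Stdlib Require Import Reals ZArith List Lra Lia FinFun.
Import Defs.
Open Scope R_scope.
Import ListNotations.


Lemma floor_spec (x : R) : IZR (Zfloor x) <= x < IZR (Zfloor x) + 1.
Proof. unfold Zfloor. destruct (base_Int_part x). fold (Int_part x). lra. Qed.

Lemma le_floor (z : Z) (x : R) : (z <= Zfloor x)%Z <-> IZR z <= x.
Proof.
  destruct (floor_spec x). split; intro H1.
  - apply IZR_le in H1. lra.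
  - assert (IZR z < IZR (Zfloor x + 1)) by (rewrite plus_IZR; lra).
    apply lt_IZR in H2. lia.
Qed.

Definition Zceil (x : R) : Z := (- Zfloor (- x))%Z.

Lemma ceil_spec (x : R) : x <= IZR (Zceil x) < x + 1.
Proof. unfold Zceil. rewrite opp_IZR. destruct (floor_spec (-x)). lra. Qed.

Lemma ceil_le (z : Z) (x : R) : (Zceil x <= z)%Z <-> x <= IZR z.
Proof.
  unfold Zceil. assert (H := le_floor (-z) (-x)). rewrite opp_IZR in H.
  split; intro H1.
  - assert (- z <= Zfloor (-x))%Z by lia. apply H in H0. lra.
  - assert (- IZR z <= - x) by lra. apply H in H0. lia.
Qed.

Fixpoint zr (s : Z) (m : nat) : list Z :=
  match m with O => [] | S m => s :: zr (s + 1) m end.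

Lemma zr_In s m x : In x (zr s m) <-> (s <= x < s + Z.of_nat m)%Z.
Proof.
  revert s. induction m; intro s; simpl.
  - lia.
  - rewrite IHm. lia.
Qed.

Lemma zr_len s m : length (zr s m) = m.
Proof. revert s; induction m; intro s; simpl; auto. Qed.

Lemma zr_NoDup s m : NoDup (zr s m).
Proof.
  revert s; induction m; intro s; simpl; constructor; auto.
  rewrite zr_In. lia.
Qed.

Definition cnt (A B : R) : nat := Z.to_nat (Zfloor B - Zceil A + 1).
Definition zri (A B : R) : list Z := zr (Zceil A) (cnt A B).

Lemma zri_In A B x : In x (zri A B) <-> A <= IZR x <= B.
Proof.
  unfold zri, cnt. rewrite zr_In.
  rewrite <- ceil_le, <- le_floor. lia.
Qed.

Lemma cnt_upper A B : INR (cnt A B) <= Rabs (B - A) + 1.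
Proof.
  unfold cnt. destruct (floor_spec B), (ceil_spec A).
  assert (Rabs (B - A) >= B - A) by (apply Rle_ge, Rle_abs).
  assert (0 <= Rabs (B - A)) by apply Rabs_pos.
  destruct (Z_le_gt_dec 0 (Zfloor B - Zceil A + 1)).
  - rewrite INR_IZR_INZ, Z2Nat.id by lia.
    rewrite plus_IZR, minus_IZR. lra.
  - replace (Z.to_nat _) with O by lia. simpl. lra.
Qed.

Lemma cnt_lower A B : B - A - 1 <= INR (cnt A B).
Proof.
  unfold cnt. destruct (floor_spec B), (ceil_spec A).
  destruct (Z_le_gt_dec 0 (Zfloor B - Zceil A + 1)).
  - rewrite INR_IZR_INZ, Z2Nat.id by lia.
    rewrite plus_IZR, minus_IZR. lra.
  - replace (Z.to_nat _) with O by lia. simpl.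
    apply Z.gt_lt in g. apply IZR_lt in g.
    rewrite plus_IZR, minus_IZR in g. lra.
Qed.

Lemma count_interval (P : Z -> bool) (xs : list Z) (A B : R) :
  NoDup xs -> (forall x, In x xs -> P x = true -> A <= IZR x <= B) ->
  INR (length (filter P xs)) <= Rabs (B - A) + 1.
Proof.
  intros Hn H. eapply Rle_trans; [|apply cnt_upper].
  apply le_INR. unfold zri. rewrite <- (zr_len (Zceil A) (cnt A B)).
  apply NoDup_incl_length. apply NoDup_filter; auto.
  intros x Hx. apply filter_In in Hx. destruct Hx.
  fold (zri A B). apply zri_In. auto.
Qed.

Definition isx (a b : pt) : bool :=
  if Rle_dec (Rabs (snd b - snd a)) (Rabs (fst b - fst a)) then true else false.
Definition sl (a b : pt) : R :=
  if isx a b then (snd b - snd a) / (fst b - fst a) else (fst b - fst a) / (snd b - snd a).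
Definition sc (a b : pt) : R :=
  if isx a b then snd a - sl a b * fst a else fst a - sl a b * snd a.
Definition slo (a b : pt) : R :=
  if isx a b then Rmin (fst a) (fst b) else Rmin (snd a) (snd b).
Definition shi (a b : pt) : R :=
  if isx a b then Rmax (fst a) (fst b) else Rmax (snd a) (snd b).
Definition ori (bx : bool) (z : Z * Z) : Z * Z := if bx then z else (snd z, fst z).
Definition DL (l c lo hi : R) (z : Z * Z) : Prop :=
  lo <= IZR (fst z) <= hi /\ snd z = Zfloor (l * IZR (fst z) + c).

Lemma ori_inv b z : ori b (ori b z) = z.
Proof. destruct b, z; reflexivity. Qed.

Lemma lattice_seg_iff a b z :
  lattice_seg a b z <-> DL (sl a b) (sc a b) (slo a b) (shi a b) (ori (isx a b) z).
Proof.
  unfold lattice_seg, DL, sc, slo, shi, ori; unfold sl; unfold isx; cbv zeta.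
  destruct (Rle_dec _ _); simpl; tauto.
Qed.

Definition seglist (a b : pt) : list (Z * Z) :=
  map (fun x => ori (isx a b) (x, Zfloor (sl a b * IZR x + sc a b))) (zri (slo a b) (shi a b)).

Lemma seglist_In a b z : In z (seglist a b) <-> lattice_seg a b z.
Proof.
  rewrite lattice_seg_iff. unfold seglist. rewrite in_map_iff. split.
  - intros [x [<- Hx]]. rewrite ori_inv. apply zri_In in Hx. split; simpl; auto.
  - intros [H1 H2]. exists (fst (ori (isx a b) z)). split.
    + rewrite <- H2. rewrite <- surjective_pairing. apply ori_inv.
    + apply zri_In. auto.
Qed.

Lemma seglist_NoDup a b : NoDup (seglist a b).
Proof.
  unfold seglist. apply FinFun.Injective_map_NoDup.
  - intros x y H. assert (H' := f_equal (ori (isx a b)) H).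
    rewrite !ori_inv in H'. congruence.
  - apply zr_NoDup.
Qed.

Lemma seglist_len a b : length (seglist a b) = cnt (slo a b) (shi a b).
Proof. unfold seglist, zri. rewrite length_map. apply zr_len. Qed.

Definition scp (k : R) (a : pt) : pt := (k * fst a, k * snd a).

Lemma Rabs_scale k x y : 0 < k -> Rabs (k * y - k * x) = k * Rabs (y - x).
Proof.
  intro Hk. replace (k * y - k * x) with (k * (y - x)) by ring.
  rewrite Rabs_mult, Rabs_pos_eq by lra. reflexivity.
Qed.

Lemma isx_scale k a b : 0 < k -> isx (scp k a) (scp k b) = isx a b.
Proof.
  intro Hk. unfold isx, scp; simpl. rewrite !Rabs_scale by auto.
  destruct (Rle_dec (k * _) _) as [H|H]; destruct (Rle_dec (Rabs _) _) as [H'|H']; auto.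
  - exfalso. apply H'. apply Rmult_le_reg_l with k; auto.
  - exfalso. apply H. apply Rmult_le_compat_l; lra.
Qed.

Lemma isx_true_nz a b : a <> b -> isx a b = true -> fst b - fst a <> 0.
Proof.
  unfold isx. destruct (Rle_dec _ _) as [H|H]; [|discriminate]. intros Hab _ E.
  rewrite E, Rabs_R0 in H. assert (H0 : snd b - snd a = 0).
  { destruct (Req_dec (snd b - snd a) 0) as [Z|Z]; auto. apply Rabs_pos_lt in Z. lra. }
  apply Hab. destruct a, b; simpl in *. f_equal; lra.
Qed.

Lemma isx_false_lt a b : isx a b = false -> Rabs (fst b - fst a) < Rabs (snd b - snd a).
Proof. unfold isx. destruct (Rle_dec _ _) as [H|H]; [discriminate|]. intros _. lra. Qed.

Lemma isx_false_nz a b : isx a b = false -> snd b - snd a <> 0.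
Proof.
  intros H E. apply isx_false_lt in H. rewrite E, Rabs_R0 in H.
  pose proof (Rabs_pos (fst b - fst a)). lra.
Qed.

Lemma isx_true_le a b : isx a b = true -> Rabs (snd b - snd a) <= Rabs (fst b - fst a).
Proof. unfold isx. destruct (Rle_dec _ _) as [H|H]; [|discriminate]. auto. Qed.

Lemma sl_scale k a b : 0 < k -> a <> b -> sl (scp k a) (scp k b) = sl a b.
Proof.
  intros Hk Hab. unfold sl. rewrite isx_scale by auto. unfold scp; simpl.
  destruct (isx a b) eqn:E.
  - apply isx_true_nz in E; auto.
    replace (k * fst b - k * fst a) with (k * (fst b - fst a)) by ring.
    replace (k * snd b - k * snd a) with (k * (snd b - snd a)) by ring.
    field. split; lra.
  - apply isx_false_nz in E; auto.
    replace (k * fst b - k * fst a) with (k * (fst b - fst a)) by ring.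
    replace (k * snd b - k * snd a) with (k * (snd b - snd a)) by ring.
    field. split; lra.
Qed.

Lemma sc_scale k a b : 0 < k -> a <> b -> sc (scp k a) (scp k b) = k * sc a b.
Proof.
  intros Hk Hab. unfold sc. rewrite sl_scale, isx_scale by auto. unfold scp; simpl.
  destruct (isx a b); ring.
Qed.

Lemma Rmin_scale k x y : 0 < k -> Rmin (k * x) (k * y) = k * Rmin x y.
Proof.
  intro Hk. unfold Rmin. destruct (Rle_dec (k*x) (k*y)) as [H|H]; destruct (Rle_dec x y) as [H'|H']; auto.
  - exfalso. apply H'. apply Rmult_le_reg_l with k; auto.
  - exfalso. apply H. apply Rmult_le_compat_l; lra.
Qed.

Lemma Rmax_scale k x y : 0 < k -> Rmax (k * x) (k * y) = k * Rmax x y.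
Proof.
  intro Hk. unfold Rmax. destruct (Rle_dec (k*x) (k*y)) as [H|H]; destruct (Rle_dec x y) as [H'|H']; auto.
  - exfalso. apply H'. apply Rmult_le_reg_l with k; auto.
  - exfalso. apply H. apply Rmult_le_compat_l; lra.
Qed.

Lemma slo_scale k a b : 0 < k -> slo (scp k a) (scp k b) = k * slo a b.
Proof.
  intros Hk. unfold slo. rewrite isx_scale by auto. unfold scp; simpl.
  destruct (isx a b); apply Rmin_scale; auto.
Qed.

Lemma shi_scale k a b : 0 < k -> shi (scp k a) (scp k b) = k * shi a b.
Proof.
  intros Hk. unfold shi. rewrite isx_scale by auto. unfold scp; simpl.
  destruct (isx a b); apply Rmax_scale; auto.
Qed.

Lemma Rmax_Rmin x y : Rmax x y - Rmin x y = Rabs (y - x).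
Proof.
  unfold Rmax, Rmin. destruct (Rle_dec x y).
  - rewrite Rabs_pos_eq; lra.
  - rewrite Rabs_left; lra.
Qed.

Definition Mj (a b : pt) : R :=
  if isx a b then Rabs (fst b - fst a) else Rabs (snd b - snd a).

Lemma shi_slo a b : shi a b - slo a b = Mj a b.
Proof. unfold shi, slo, Mj. destruct (isx a b); apply Rmax_Rmin. Qed.

Lemma slo_le_shi a b : slo a b <= shi a b.
Proof. pose proof (shi_slo a b). unfold Mj in H. destruct (isx a b); pose proof (Rabs_pos (fst b - fst a)); pose proof (Rabs_pos (snd b - snd a)); lra. Qed.

Lemma sl_bound a b : Rabs (sl a b) <= 1.
Proof.
  unfold sl. destruct (isx a b) eqn:E.
  - apply isx_true_le in E. destruct (Req_dec (fst b - fst a) 0) as [Z|Z].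
    + rewrite Z. unfold Rdiv. rewrite Rinv_0, Rmult_0_r, Rabs_R0. lra.
    + unfold Rdiv. rewrite Rabs_mult, Rabs_inv.
      apply Rmult_le_reg_r with (Rabs (fst b - fst a)). apply Rabs_pos_lt; auto.
      rewrite Rmult_assoc, Rinv_l by (apply Rabs_no_R0; auto). lra.
  - assert (E' := isx_false_nz _ _ E). apply isx_false_lt in E.
    unfold Rdiv. rewrite Rabs_mult, Rabs_inv.
    apply Rmult_le_reg_r with (Rabs (snd b - snd a)). apply Rabs_pos_lt; auto.
    rewrite Rmult_assoc, Rinv_l by (apply Rabs_no_R0; auto). lra.
Qed.

Lemma sl_bound_strict a b : isx a b = false -> Rabs (sl a b) < 1.
Proof.
  intro E. unfold sl. rewrite E.
  assert (E' := isx_false_nz _ _ E). apply isx_false_lt in E.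
  unfold Rdiv. rewrite Rabs_mult, Rabs_inv.
  apply Rmult_lt_reg_r with (Rabs (snd b - snd a)). apply Rabs_pos_lt; auto.
  rewrite Rmult_assoc, Rinv_l by (apply Rabs_no_R0; auto). lra.
Qed.

Lemma floor_eq_close l1 c1 l2 c2 x :
  Zfloor (l1 * x + c1) = Zfloor (l2 * x + c2) -> Rabs ((l1 - l2) * x + (c1 - c2)) < 1.
Proof.
  intro E. destruct (floor_spec (l1 * x + c1)), (floor_spec (l2 * x + c2)).
  rewrite E in *. apply Rabs_def1; lra.
Qed.

Lemma interval_lin d e : d <> 0 -> exists A B, Rabs (B - A) <= 2 / Rabs d /\
  forall x, Rabs (d * x + e) < 1 -> A <= x <= B.
Proof.
  intro Hd. destruct (Rlt_or_le 0 d) as [Hp|Hn].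
  - exists ((-1 - e) / d), ((1 - e) / d). split.
    + replace ((1 - e) / d - (-1 - e) / d) with (2 / d) by (field; lra).
      rewrite (Rabs_pos_eq d) by lra.
      rewrite Rabs_pos_eq. lra. apply Rlt_le, Rdiv_lt_0_compat; lra.
    + intros x Hx. apply Rabs_def2 in Hx. destruct Hx. split.
      * apply Rmult_le_reg_l with d; auto. unfold Rdiv. rewrite <- Rmult_assoc, Rinv_r_simpl_m by lra. lra.
      * apply Rmult_le_reg_l with d; auto. unfold Rdiv. rewrite <- Rmult_assoc, Rinv_r_simpl_m by lra. lra.
  - assert (d < 0) by lra.
    exists ((1 - e) / d), ((-1 - e) / d). split.
    + replace ((-1 - e) / d - (1 - e) / d) with (2 / - d) by (field; lra).
      rewrite (Rabs_left d) by lra.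
      rewrite Rabs_pos_eq. lra. apply Rlt_le, Rdiv_lt_0_compat; lra.
    + intros x Hx. apply Rabs_def2 in Hx. destruct Hx. split.
      * apply Rmult_le_reg_l with (-d); [lra|]. unfold Rdiv.
        replace (- d * ((1 - e) * / d)) with (-(1 - e)) by (field; lra). lra.
      * apply Rmult_le_reg_l with (-d); [lra|]. unfold Rdiv.
        replace (- d * ((-1 - e) * / d)) with (-(-1 - e)) by (field; lra). lra.
Qed.

Lemma cross_interval l m c d : Rabs (l * m) < 1 -> Rabs m <= 1 ->
  exists A B, Rabs (B - A) <= 4 / (1 - l * m) /\
  forall x y : Z, y = Zfloor (l * IZR x + c) -> x = Zfloor (m * IZR y + d) -> A <= IZR x <= B.
Proof.
  intros Hlm Hm. set (q := 1 - l * m).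
  assert (Hq : 0 < q) by (unfold q; apply Rabs_def2 in Hlm; lra).
  exists ((m * c + d - 2) / q), ((m * c + d + 2) / q). split.
  - replace ((m * c + d + 2) / q - (m * c + d - 2) / q) with (4 / q) by (field; lra).
    rewrite Rabs_pos_eq. lra. apply Rlt_le, Rdiv_lt_0_compat; lra.
  - intros x y Hy Hx.
    destruct (floor_spec (l * IZR x + c)) as [F1 F2]. rewrite <- Hy in F1, F2.
    destruct (floor_spec (m * IZR y + d)) as [G1 G2]. rewrite <- Hx in G1, G2.
    set (e1 := l * IZR x + c - IZR y) in *. set (e2 := m * IZR y + d - IZR x) in *.
    assert (Hx' : q * IZR x = m * c + d - m * e1 - e2) by (unfold q, e1, e2; ring).
    assert (Hme : Rabs (m * e1) <= e1).
    { rewrite Rabs_mult, (Rabs_pos_eq e1) by (unfold e1; lra).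
      rewrite <- (Rmult_1_l e1) at 2. apply Rmult_le_compat_r; unfold e1; lra. }
    pose proof (Rle_abs (m * e1)). pose proof (Rle_abs (- (m * e1))). rewrite Rabs_Ropp in H0. unfold e1, e2 in *.
    split.
    + apply Rmult_le_reg_l with q; auto. unfold Rdiv. rewrite <- Rmult_assoc, Rinv_r_simpl_m by lra. lra.
    + apply Rmult_le_reg_l with q; auto. unfold Rdiv. rewrite <- Rmult_assoc, Rinv_r_simpl_m by lra. lra.
Qed.

Definition rpt (bx : bool) (l c u : R) : pt := if bx then (u, l * u + c) else (l * u + c, u).

Lemma div01 p q : q <> 0 -> Rmin 0 q <= p <= Rmax 0 q -> 0 <= p / q <= 1.
Proof.
  intros Hq H. unfold Rmin, Rmax in H. destruct (Rle_dec 0 q).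
  - assert (0 < q) by lra. split.
    + apply Rmult_le_reg_r with q; auto. unfold Rdiv. rewrite Rmult_assoc, Rinv_l by lra. lra.
    + apply Rmult_le_reg_r with q; auto. unfold Rdiv. rewrite Rmult_assoc, Rinv_l by lra. lra.
  - assert (q < 0) by lra. replace (p / q) with ((-p) / (-q)) by (field; lra). split.
    + apply Rmult_le_reg_r with (-q); [lra|]. unfold Rdiv. rewrite Rmult_assoc, Rinv_l by lra. lra.
    + apply Rmult_le_reg_r with (-q); [lra|]. unfold Rdiv. rewrite Rmult_assoc, Rinv_l by lra. lra.
Qed.

Lemma minmax_shift x y u : Rmin x y <= u <= Rmax x y -> Rmin 0 (y - x) <= u - x <= Rmax 0 (y - x).
Proof. unfold Rmin, Rmax. destruct (Rle_dec x y), (Rle_dec 0 (y - x)); lra. Qed.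

Lemma rpt_on_seg a b u : a <> b -> slo a b <= u <= shi a b ->
  on_seg a b (rpt (isx a b) (sl a b) (sc a b) u).
Proof.
  intros Hab Hu. unfold slo, shi, rpt, sc, sl in *. destruct (isx a b) eqn:E.
  - assert (Hz := isx_true_nz _ _ Hab E).
    exists ((u - fst a) / (fst b - fst a)). split; [apply div01; auto; apply minmax_shift; auto|].
    simpl. split; field; auto.
  - assert (Hz := isx_false_nz _ _ E).
    exists ((u - snd a) / (snd b - snd a)). split; [apply div01; auto; apply minmax_shift; auto|].
    simpl. split; field; auto.
Qed.

Lemma Mj_pos a b : a <> b -> 0 < Mj a b.
Proof.
  intro Hab. unfold Mj. destruct (isx a b) eqn:E.
  - apply Rabs_pos_lt. apply isx_true_nz; auto.
  - apply Rabs_pos_lt. apply isx_false_nz; auto.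
Qed.

Lemma slo_lt_shi a b : a <> b -> slo a b < shi a b.
Proof. intro H. pose proof (shi_slo a b). pose proof (Mj_pos a b H). lra. Qed.

Lemma same_line a1 b1 a2 b2 : a1 <> b1 -> a2 <> b2 ->
  isx a1 b1 = isx a2 b2 -> sl a1 b1 = sl a2 b2 -> sc a1 b1 = sc a2 b2 ->
  (forall x y, x <> y -> on_seg a1 b1 x -> on_seg a2 b2 x -> on_seg a1 b1 y -> on_seg a2 b2 y -> False) ->
  shi a2 b2 <= slo a1 b1 \/ shi a1 b1 <= slo a2 b2.
Proof.
  intros H1 H2 Ex El Ec HS.
  destruct (Rlt_or_le (slo a1 b1) (shi a2 b2)) as [L1|L1]; [|auto].
  destruct (Rlt_or_le (slo a2 b2) (shi a1 b1)) as [L2|L2]; [|auto].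
  exfalso. pose proof (slo_lt_shi _ _ H1). pose proof (slo_lt_shi _ _ H2).
  set (u1 := Rmax (slo a1 b1) (slo a2 b2)). set (u2 := Rmin (shi a1 b1) (shi a2 b2)).
  assert (R1 : slo a1 b1 <= u1 /\ slo a2 b2 <= u1) by (unfold u1, Rmax; destruct (Rle_dec _ _); lra).
  assert (R2 : u2 <= shi a1 b1 /\ u2 <= shi a2 b2) by (unfold u2, Rmin; destruct (Rle_dec _ _); lra).
  assert (R3 : u1 < u2) by (unfold u1, u2, Rmax, Rmin; destruct (Rle_dec _ _); destruct (Rle_dec _ _); lra).
  apply (HS (rpt (isx a1 b1) (sl a1 b1) (sc a1 b1) u1) (rpt (isx a1 b1) (sl a1 b1) (sc a1 b1) u2)).
  - unfold rpt. destruct (isx a1 b1); intro E; inversion E; lra.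
  - apply rpt_on_seg; auto; lra.
  - rewrite Ex, El, Ec. apply rpt_on_seg; auto; lra.
  - apply rpt_on_seg; auto; lra.
  - rewrite Ex, El, Ec. apply rpt_on_seg; auto; lra.
Qed.

Lemma exists_nat_gt r : exists N : nat, r < INR N.
Proof.
  destruct (archimed r) as [H1 H2]. destruct (Z_le_gt_dec (up r) 0).
  - exists O. simpl. apply IZR_le in l. lra.
  - exists (Z.to_nat (up r)). rewrite INR_IZR_INZ, Z2Nat.id by lia. lra.
Qed.

Lemma ori_cross b1 b2 w : b1 <> b2 -> ori b2 (ori b1 w) = (snd w, fst w).
Proof. destruct b1, b2, w; simpl; congruence. Qed.

Lemma core a1 b1 a2 b2 : a1 <> b1 -> a2 <> b2 ->
  (forall x y, x <> y -> on_seg a1 b1 x -> on_seg a2 b2 x -> on_seg a1 b1 y -> on_seg a2 b2 y -> False) ->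
  exists (K0 : nat) (W : R), forall k : nat, (K0 <= k)%nat -> exists A B, Rabs (B - A) <= W /\
  forall x : Z, INR k * slo a1 b1 <= IZR x <= INR k * shi a1 b1 ->
  DL (sl a2 b2) (INR k * sc a2 b2) (INR k * slo a2 b2) (INR k * shi a2 b2)
     (ori (isx a2 b2) (ori (isx a1 b1) (x, Zfloor (sl a1 b1 * IZR x + INR k * sc a1 b1)))) ->
  A <= IZR x <= B.
Proof.
  intros H1 H2 HS.
  destruct (Bool.bool_dec (isx a1 b1) (isx a2 b2)) as [Eb|Eb].
  - rewrite <- Eb. setoid_rewrite ori_inv. unfold DL; simpl.
    destruct (Req_dec (sl a1 b1) (sl a2 b2)) as [El|El].
    + destruct (Req_dec (sc a1 b1) (sc a2 b2)) as [Ec|Ec].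
      * destruct (same_line a1 b1 a2 b2 H1 H2 Eb El Ec HS) as [S|S].
        -- exists O, 0. intros k _. exists (INR k * slo a1 b1), (INR k * slo a1 b1).
           split; [rewrite Rminus_diag, Rabs_R0; lra|].
           intros x Hx [Hx2 _]. pose proof (pos_INR k).
           assert (INR k * shi a2 b2 <= INR k * slo a1 b1) by (apply Rmult_le_compat_l; auto). lra.
        -- exists O, 0. intros k _. exists (INR k * slo a2 b2), (INR k * slo a2 b2).
           split; [rewrite Rminus_diag, Rabs_R0; lra|].
           intros x Hx [Hx2 _]. pose proof (pos_INR k).
           assert (INR k * shi a1 b1 <= INR k * slo a2 b2) by (apply Rmult_le_compat_l; auto). lra.
      * assert (Hd : 0 < Rabs (sc a1 b1 - sc a2 b2)) by (apply Rabs_pos_lt; lra).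
        destruct (exists_nat_gt (/ Rabs (sc a1 b1 - sc a2 b2))) as [N HN].
        exists N, 0. intros k Hk. exists 0, 0. split; [rewrite Rminus_diag, Rabs_R0; lra|].
        intros x Hx [_ Hy]. exfalso.
        apply floor_eq_close in Hy. rewrite El in Hy.
        replace ((sl a2 b2 - sl a2 b2) * IZR x + (INR k * sc a1 b1 - INR k * sc a2 b2))
          with (INR k * (sc a1 b1 - sc a2 b2)) in Hy by ring.
        rewrite Rabs_mult, (Rabs_pos_eq (INR k)) in Hy by apply pos_INR.
        apply le_INR in Hk.
        assert (/ Rabs (sc a1 b1 - sc a2 b2) * Rabs (sc a1 b1 - sc a2 b2) <
                INR k * Rabs (sc a1 b1 - sc a2 b2)) by (apply Rmult_lt_compat_r; lra).
        rewrite Rinv_l in H by lra. lra.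
    + exists O, (2 / Rabs (sl a1 b1 - sl a2 b2)). intros k _.
      destruct (interval_lin (sl a1 b1 - sl a2 b2) (INR k * sc a1 b1 - INR k * sc a2 b2)) as [A [B [HW HI]]].
      { lra. }
      exists A, B. split; auto. intros x _ [_ Hy]. apply HI. apply floor_eq_close. auto.
  - setoid_rewrite (ori_cross _ _ _ Eb). unfold DL; simpl.
    assert (Hlm : Rabs (sl a1 b1 * sl a2 b2) < 1).
    { rewrite Rabs_mult. pose proof (sl_bound a1 b1). pose proof (sl_bound a2 b2).
      pose proof (Rabs_pos (sl a1 b1)). pose proof (Rabs_pos (sl a2 b2)).
      destruct (isx a1 b1) eqn:E1.
      - assert (E2 : isx a2 b2 = false) by (destruct (isx a2 b2); congruence).
        apply sl_bound_strict in E2.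
        assert (Rabs (sl a1 b1) * Rabs (sl a2 b2) <= 1 * Rabs (sl a2 b2)) by (apply Rmult_le_compat_r; auto). lra.
      - apply sl_bound_strict in E1.
        assert (Rabs (sl a1 b1) * Rabs (sl a2 b2) <= Rabs (sl a1 b1) * 1) by (apply Rmult_le_compat_l; auto). lra. }
    exists O, (4 / (1 - sl a1 b1 * sl a2 b2)). intros k _.
    destruct (cross_interval (sl a1 b1) (sl a2 b2) (INR k * sc a1 b1) (INR k * sc a2 b2) Hlm (sl_bound a2 b2))
      as [A [B [HW HI]]].
    exists A, B. split; auto. intros x _ [_ Hy]. eapply HI; eauto.
Qed.

Definition zzdec : forall x y : Z * Z, {x = y} + {x <> y}.
Proof. decide equality; apply Z.eq_dec. Defined.

Definition inb (l : list (Z * Z)) (z : Z * Z) : bool := if in_dec zzdec z l then true else false.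

Lemma inb_true l z : inb l z = true <-> In z l.
Proof. unfold inb. destruct (in_dec zzdec z l); split; auto; discriminate. Qed.

Definition Lk (a b : pt) (k : nat) := seglist (scp (INR k) a) (scp (INR k) b).

Lemma filter_map_len {A B : Type} (P : B -> bool) (f : A -> B) (l : list A) :
  length (filter P (map f l)) = length (filter (fun x => P (f x)) l).
Proof. induction l; simpl; auto. destruct (P (f a)); simpl; auto. Qed.

Lemma pair_overlap a1 b1 a2 b2 : a1 <> b1 -> a2 <> b2 ->
  (forall x y, x <> y -> on_seg a1 b1 x -> on_seg a2 b2 x -> on_seg a1 b1 y -> on_seg a2 b2 y -> False) ->
  exists (K0 : nat) (C : R), forall k : nat, (K0 <= k)%nat ->
    INR (length (filter (inb (Lk a2 b2 k)) (Lk a1 b1 k))) <= C.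
Proof.
  intros H1 H2 HS. destruct (core a1 b1 a2 b2 H1 H2 HS) as [K0 [W HC]].
  exists (Nat.max K0 1), (W + 1). intros k Hk.
  assert (Hkp : 0 < INR k) by (apply lt_0_INR; lia).
  destruct (HC k ltac:(lia)) as [A [B [HW HI]]].
  unfold Lk, seglist. rewrite filter_map_len.
  eapply Rle_trans; [apply count_interval with (A := A) (B := B)|lra].
  - apply zr_NoDup.
  - intros x Hx Hin. apply zri_In in Hx. apply inb_true, seglist_In, lattice_seg_iff in Hin.
    rewrite slo_scale, shi_scale in Hx by auto.
    rewrite sl_scale, sc_scale, slo_scale, shi_scale, !isx_scale in Hin by auto.
    rewrite sl_scale, sc_scale in Hin by auto. apply HI; auto.
Qed.

Fixpoint catl (L : nat -> list (Z * Z)) (m : nat) : list (Z * Z) :=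
  match m with O => nil | S m => catl L m ++ L m end.

Lemma nodup_len l : (length (nodup zzdec l) <= length l)%nat.
Proof.
  apply NoDup_incl_length. apply NoDup_nodup. intros x Hx. apply nodup_In in Hx. auto.
Qed.

Lemma union_lower a b : NoDup b ->
  (length (nodup zzdec a) + length b <= length (nodup zzdec (a ++ b)) + length (filter (inb a) b))%nat.
Proof.
  intro Hb.
  assert (H : (length (nodup zzdec a ++ filter (fun z => negb (inb a z)) b) <= length (nodup zzdec (a ++ b)))%nat).
  { apply NoDup_incl_length.
    - apply NoDup_app. apply NoDup_nodup. apply NoDup_filter; auto.
      intros z Hz Hz'. apply nodup_In in Hz. apply filter_In in Hz'. destruct Hz' as [_ Hz'].
      assert (inb a z = true) by (apply inb_true; auto). rewrite H in Hz'. discriminate.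
    - intros z Hz. apply nodup_In. apply in_app_or in Hz. apply in_or_app. destruct Hz as [Hz|Hz].
      + left. apply nodup_In in Hz; auto.
      + right. apply filter_In in Hz. tauto. }
  rewrite length_app in H. pose proof (filter_length (inb a) b). lia.
Qed.

Lemma filter_app_len a c b :
  (length (filter (inb (a ++ c)) b) <= length (filter (inb a) b) + length (filter (inb c) b))%nat.
Proof.
  induction b as [|z b IH]; simpl; auto.
  destruct (inb (a ++ c) z) eqn:E.
  - apply inb_true in E. apply in_app_or in E.
    destruct E as [E|E]; apply inb_true in E; rewrite E; simpl;
      [destruct (inb c z)|destruct (inb a z)]; simpl; lia.
  - destruct (inb a z), (inb c z); simpl; lia.
Qed.

Lemma filter_nil_len b : length (filter (inb nil) b) = O.
Proof. induction b; simpl; auto. Qed.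

Lemma filter_catl L m b :
  INR (length (filter (inb (catl L m)) b)) <= rsum (fun i => INR (length (filter (inb (L i)) b))) m.
Proof.
  induction m; simpl.
  - rewrite filter_nil_len. simpl. lra.
  - eapply Rle_trans. apply le_INR, filter_app_len. rewrite plus_INR. lra.
Qed.

Lemma union_lower_all L m : (forall j, NoDup (L j)) ->
  rsum (fun j => INR (length (L j))) m
  - rsum (fun j => rsum (fun i => INR (length (filter (inb (L i)) (L j)))) j) m
  <= INR (length (nodup zzdec (catl L m))).
Proof.
  intro HN. induction m; simpl.
  - lra.
  - pose proof (union_lower (catl L m) (L m) (HN m)) as H. apply le_INR in H.
    rewrite !plus_INR in H. pose proof (filter_catl L m (L m)). lra.
Qed.

Lemma catl_len L m : INR (length (catl L m)) = rsum (fun j => INR (length (L j))) m.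
Proof. induction m; simpl; auto. rewrite length_app, plus_INR, IHm. auto. Qed.

Lemma union_upper_all L m :
  INR (length (nodup zzdec (catl L m))) <= rsum (fun j => INR (length (L j))) m.
Proof. rewrite <- catl_len. apply le_INR, nodup_len. Qed.

Lemma catl_In L m z : In z (catl L m) <-> exists r, (r < m)%nat /\ In z (L r).
Proof.
  induction m; simpl.
  - split; [tauto|]. intros [r [H _]]. lia.
  - rewrite in_app_iff, IHm. split.
    + intros [[r [H1 H2]]|H]; [exists r; split; auto; lia|exists m; auto].
    + intros [r [H1 H2]]. destruct (Nat.eq_dec r m); [subst; auto|left; exists r; split; auto; lia].
Qed.

Lemma rsum_le f g m : (forall r, (r < m)%nat -> f r <= g r) -> rsum f m <= rsum g m.
Proof. induction m; simpl; intros H. lra. assert (f m <= g m) by (apply H; lia).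
  assert (rsum f m <= rsum g m) by (apply IHm; intros; apply H; lia). lra. Qed.

Lemma rsum_plus f g m : rsum (fun r => f r + g r) m = rsum f m + rsum g m.
Proof. induction m; simpl; [lra|rewrite IHm; ring]. Qed.

Lemma rsum_mult c f m : rsum (fun r => c * f r) m = c * rsum f m.
Proof. induction m; simpl; [ring|rewrite IHm; ring]. Qed.

Lemma rsum_const c m : rsum (fun _ => c) m = INR m * c.
Proof. induction m; [simpl; ring|]. change (rsum (fun _ => c) (S m)) with (rsum (fun _ => c) m + c).
  rewrite IHm, S_INR; ring. Qed.

Lemma rsum_ext f g m : (forall r, (r < m)%nat -> f r = g r) -> rsum f m = rsum g m.
Proof. intro H. apply Rle_antisym; apply rsum_le; intros r Hr; rewrite H; auto; lra. Qed.

Lemma rsum_pos f m : (0 < m)%nat -> (forall r, (r < m)%nat -> 0 < f r) -> 0 < rsum f m.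
Proof.
  induction m; simpl; intros H0 H. lia.
  assert (0 < f m) by (apply H; lia). destruct m. simpl. lra.
  assert (0 < rsum f (S m)) by (apply IHm; [lia|intros; apply H; lia]). lra.
Qed.

Lemma unif (Q : nat -> nat -> R -> Prop) m :
  (forall i k C C', C <= C' -> Q i k C -> Q i k C') ->
  (forall i, (i < m)%nat -> exists (K : nat) (C : R), forall k, (K <= k)%nat -> Q i k C) ->
  exists (K : nat) (C : R), forall i, (i < m)%nat -> forall k, (K <= k)%nat -> Q i k C.
Proof.
  intros Hmon. induction m; intro H.
  - exists O, 0. intros. lia.
  - destruct IHm as [K1 [C1 H1]]. { intros; apply H; lia. }
    destruct (H m ltac:(lia)) as [K2 [C2 H2]].
    exists (Nat.max K1 K2), (Rmax C1 C2). intros i Hi k Hk.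
    destruct (Nat.eq_dec i m).
    + subst. eapply Hmon; [apply Rmax_r|]. apply H2; lia.
    + eapply Hmon; [apply Rmax_l|]. apply H1; lia.
Qed.

Lemma pow2_gt_0 x : x <> 0 -> 0 < x ^ 2.
Proof. intro H. pose proof (Rsqr_pos_lt x H). unfold Rsqr in H0. simpl. lra. Qed.

Lemma edist_pos a b : a <> b -> 0 < edist a b.
Proof.
  intro H. unfold edist. apply sqrt_lt_R0.
  destruct (Req_dec (fst b - fst a) 0) as [E1|E1].
  - destruct (Req_dec (snd b - snd a) 0) as [E2|E2].
    + exfalso. apply H. destruct a, b; simpl in *. f_equal; lra.
    + assert (0 < (snd b - snd a) ^ 2) by (apply pow2_gt_0; auto). pose proof (pow2_ge_0 (fst b - fst a)). lra.
  - assert (0 < (fst b - fst a) ^ 2) by (apply pow2_gt_0; auto). pose proof (pow2_ge_0 (snd b - snd a)). lra.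
Qed.

Lemma edist_scale k a b : 0 <= k -> edist (scp k a) (scp k b) = k * edist a b.
Proof.
  intro Hk. unfold edist, scp; cbn [fst snd].
  replace ((k * fst b - k * fst a) ^ 2 + (k * snd b - k * snd a) ^ 2)
    with (k ^ 2 * ((fst b - fst a) ^ 2 + (snd b - snd a) ^ 2)) by ring.
  rewrite sqrt_mult_alt by (apply pow2_ge_0). rewrite sqrt_pow2; auto.
Qed.

Lemma lam_term a b : a <> b ->
  / sqrt (1 + lam (fst b - fst a, snd b - snd a) ^ 2) * edist a b = Mj a b.
Proof.
  intro Hab. unfold lam, Mj, edist; cbn [fst snd].
  destruct (isx a b) eqn:E.
  - pose proof (isx_true_nz _ _ Hab E) as Hz.
    unfold isx in E. destruct (Rle_dec _ _) as [Hl|Hl]; [|discriminate].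
    set (v1 := fst b - fst a) in *. set (v2 := snd b - snd a) in *.
    rewrite pow2_abs.
    replace (v1 ^ 2 + v2 ^ 2) with (v1 ^ 2 * (1 + (v2 / v1) ^ 2)) by (field; auto).
    assert (0 < 1 + (v2 / v1) ^ 2) by (pose proof (pow2_ge_0 (v2 / v1)); lra).
    rewrite sqrt_mult_alt by (apply pow2_ge_0).
    rewrite <- (pow2_abs v1), sqrt_pow2 by (apply Rabs_pos).
    field. apply Rgt_not_eq, sqrt_lt_R0; auto.
  - pose proof (isx_false_nz _ _ E) as Hz.
    unfold isx in E. destruct (Rle_dec _ _) as [Hl|Hl]; [discriminate|].
    set (v1 := fst b - fst a) in *. set (v2 := snd b - snd a) in *.
    rewrite pow2_abs.
    replace (v1 ^ 2 + v2 ^ 2) with (v2 ^ 2 * (1 + (v1 / v2) ^ 2)) by (field; auto).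
    assert (0 < 1 + (v1 / v2) ^ 2) by (pose proof (pow2_ge_0 (v1 / v2)); lra).
    rewrite sqrt_mult_alt by (apply pow2_ge_0).
    rewrite <- (pow2_abs v2), sqrt_pow2 by (apply Rabs_pos).
    field. apply Rgt_not_eq, sqrt_lt_R0; auto.
Qed.

Lemma seg_len_bounds k a b : 0 < k ->
  k * Mj a b - 1 <= INR (length (seglist (scp k a) (scp k b))) <= k * Mj a b + 1.
Proof.
  intro Hk. rewrite seglist_len.
  assert (H : shi (scp k a) (scp k b) - slo (scp k a) (scp k b) = k * Mj a b).
  { rewrite shi_scale, slo_scale, <- shi_slo by auto. ring. }
  assert (0 <= k * Mj a b).
  { apply Rmult_le_pos; [lra|]. rewrite <- shi_slo. pose proof (slo_le_shi a b). lra. }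
  split.
  - pose proof (cnt_lower (slo (scp k a) (scp k b)) (shi (scp k a) (scp k b))). lra.
  - pose proof (cnt_upper (slo (scp k a) (scp k b)) (shi (scp k a) (scp k b))).
    rewrite H, Rabs_pos_eq in H1 by auto. lra.
Qed.

Lemma nxt_cases n i : (i < n)%nat -> ((S i < n)%nat /\ nxt n i = S i) \/ (S i = n /\ nxt n i = O).
Proof.
  intro H. unfold nxt. destruct (Nat.eq_dec (S i) n) as [E|E].
  - right. split; auto. rewrite E. apply Nat.Div0.mod_same.
  - left. split; [lia|]. apply Nat.mod_small. lia.
Qed.

Lemma nxt_lt n i : (i < n)%nat -> (nxt n i < n)%nat.
Proof. intro H. destruct (nxt_cases n i H) as [[A B]|[A B]]; rewrite B; lia. Qed.

Lemma nxt_nxt n i j : (3 <= n)%nat -> (i < n)%nat -> (j < n)%nat -> j = nxt n i -> i = nxt n j -> False.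
Proof.
  intros H3 Hi Hj E1 E2.
  destruct (nxt_cases n i Hi) as [[A B]|[A B]]; destruct (nxt_cases n j Hj) as [[C D]|[C D]]; lia.
Qed.

Lemma simple_pair n p i j : simple_polygon n p -> (i < n)%nat -> (j < n)%nat -> i <> j ->
  forall x y, x <> y -> on_seg (p i) (p (nxt n i)) x -> on_seg (p j) (p (nxt n j)) x ->
  on_seg (p i) (p (nxt n i)) y -> on_seg (p j) (p (nxt n j)) y -> False.
Proof.
  intros [H3 [_ HI]] Hi Hj Hij x y Hxy X1 X2 Y1 Y2.
  destruct (HI i j x Hi Hj Hij X1 X2) as [[A B]|[A B]];
  destruct (HI i j y Hi Hj Hij Y1 Y2) as [[C D]|[C D]]; try congruence.
  - apply (nxt_nxt n i j); auto.
  - apply (nxt_nxt n i j); auto.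
Qed.

Theorem lemma6p4 (n : nat) (p : nat -> pt) :
  simple_polygon n p ->
  exists N : nat -> nat,
    (forall k : nat, is_card (lattice_poly n (scale k p)) (N k)) /\
    Un_cv (fun k => INR (N k) / perimeter n (scale k p))
      (rsum (fun r => / sqrt (1 + lam (edge_dir n p r) ^ 2)
                      * (edist (p r) (p (nxt n r)) / perimeter n p)) n).
Proof.
  intro Hs. pose proof Hs as [H3 [Hnd _]].
  set (L := fun k r => Lk (p r) (p (nxt n r)) k).
  exists (fun k => length (nodup zzdec (catl (L k) n))). split.
  { intro k. exists (nodup zzdec (catl (L k) n)). split; [apply NoDup_nodup|split; auto].
    intro z. rewrite nodup_In, catl_In. unfold lattice_poly. split.
    - intros [r [Hr Hz]]. exists r. split; auto. unfold L, Lk in Hz. apply seglist_In in Hz. exact Hz.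
    - intros [r [Hr Hz]]. exists r. split; auto. unfold L, Lk. apply seglist_In. exact Hz. }
  set (P := perimeter n p).
  set (Mr := fun r => Mj (p r) (p (nxt n r))).
  set (SM := rsum Mr n).
  assert (HP : 0 < P).
  { unfold P, perimeter. apply rsum_pos; [lia|]. intros r Hr. apply edist_pos. auto. }
  assert (Hperim : forall k, perimeter n (scale k p) = INR k * P).
  { intro k. unfold P, perimeter. rewrite <- rsum_mult. apply rsum_ext. intros r Hr.
    apply (edist_scale (INR k) (p r) (p (nxt n r))). apply pos_INR. }
  assert (Htarget : rsum (fun r => / sqrt (1 + lam (edge_dir n p r) ^ 2)
                      * (edist (p r) (p (nxt n r)) / P)) n = / P * SM).
  { unfold SM. rewrite <- rsum_mult. apply rsum_ext. intros r Hr. fold P.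
    unfold Mr. rewrite <- lam_term by auto. unfold edge_dir. unfold Rdiv. ring. }
  rewrite Htarget.
  assert (HU : exists (K : nat) (C : R), forall j, (j < n)%nat -> forall k, (K <= k)%nat ->
             forall i, (i < j)%nat -> INR (length (filter (inb (L k i)) (L k j))) <= C).
  { apply unif.
    - intros j k C C' HC H i Hi. specialize (H i Hi). lra.
    - intros j Hj. destruct (unif (fun i k C => INR (length (filter (inb (L k i)) (L k j))) <= C) j) as [K [C HH]].
      + intros; lra.
      + intros i Hi. unfold L.
        apply pair_overlap; auto; try (apply Hnd; lia).
        intros x y Hxy X1 X2 Y1 Y2. apply (simple_pair n p j i Hs Hj ltac:(lia) ltac:(lia) x y); auto.
      + exists K, C. intros k Hk i Hi. apply HH; auto. }
  destruct HU as [K1 [C HU]].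
  set (D := rsum (fun j => rsum (fun _ => C) j) n).
  set (E := INR n + D).
  assert (Hbound : forall k, (Nat.max K1 1 <= k)%nat ->
    Rabs (INR (length (nodup zzdec (catl (L k) n))) - INR k * SM) <= E).
  { intros k Hk. assert (Hkp : 0 < INR k) by (apply lt_0_INR; lia).
    pose proof (union_lower_all (L k) n (fun j => seglist_NoDup _ _)) as Hlo.
    pose proof (union_upper_all (L k) n) as Hup.
    assert (Hov : rsum (fun j => rsum (fun i => INR (length (filter (inb (L k i)) (L k j)))) j) n <= D).
    { apply rsum_le. intros j Hj. apply rsum_le. intros i Hi. apply HU; auto; lia. }
    assert (Hs1 : rsum (fun j => INR (length (L k j))) n <= INR k * SM + INR n).
    { eapply Rle_trans. apply (rsum_le _ (fun r => INR k * Mr r + 1)).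
      - intros r Hr. unfold L, Lk, Mr. apply seg_len_bounds; auto.
      - rewrite rsum_plus, rsum_mult, rsum_const. unfold SM. lra. }
    assert (Hs2 : INR k * SM - INR n <= rsum (fun j => INR (length (L k j))) n).
    { eapply Rle_trans; [|apply (rsum_le (fun r => INR k * Mr r - 1))].
      - rewrite (rsum_ext (fun r => INR k * Mr r - 1) (fun r => INR k * Mr r + -1)) by (intros; ring).
        rewrite rsum_plus, rsum_mult, rsum_const. unfold SM. lra.
      - intros r Hr. unfold L, Lk, Mr. apply seg_len_bounds; auto. }
    assert (0 <= D).
    { apply Rle_trans with (rsum (fun _ => 0) n). rewrite rsum_const; lra.
      eapply Rle_trans; [|apply Hov]. apply rsum_le; intros j _.
      apply Rle_trans with (rsum (fun _ => 0) j). rewrite rsum_const; lra.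
      apply rsum_le; intros; apply pos_INR. }
    apply Rabs_le. unfold E. lra.
  }
  intros eps Heps.
  destruct (exists_nat_gt (E / (P * eps))) as [N0 HN0].
  exists (Nat.max (Nat.max K1 1) N0). intros k Hk. unfold R_dist.
  assert (Hkp : 0 < INR k) by (apply lt_0_INR; lia).
  specialize (Hbound k ltac:(lia)). rewrite Hperim.
  assert (HkN : E / (P * eps) < INR k) by (eapply Rlt_le_trans; [apply HN0|apply le_INR; lia]).
  assert (HE : E < INR k * P * eps).
  { apply Rmult_lt_compat_r with (r := P * eps) in HkN; [|nra].
    unfold Rdiv in HkN. rewrite Rmult_assoc, Rinv_l, Rmult_1_r in HkN by nra. nra. }
  set (Nk := INR (length (nodup zzdec (catl (L k) n)))) in *.
  replace (Nk / (INR k * P) - / P * SM) with ((Nk - INR k * SM) / (INR k * P)) by (field; lra).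
  pose proof (Rle_abs (Nk - INR k * SM)). pose proof (Rle_abs (- (Nk - INR k * SM))).
  rewrite Rabs_Ropp in H0.
  apply Rabs_def1.
  - apply Rmult_lt_reg_r with (INR k * P); [nra|]. unfold Rdiv. rewrite Rmult_assoc, Rinv_l by nra. nra.
  - apply Rmult_lt_reg_r with (INR k * P); [nra|]. unfold Rdiv. rewrite Rmult_assoc, Rinv_l by nra. nra.
Qed.
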